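(* Let $a,b$ be integers with $0<b<a$, let $S=\langle a,a+1,\ldots,a+b\rangle$ with conductor $c$, and let $m\ge 2c-1$. Let $q$ be a nonnegative integer and $j\in\{0,\ldots,a-1\}$. Then $$\mathrm D(m,m+qa+j)=\mathrm D(m)\cup\Big\{m-(ka+r)\ \Big|\ 0\le r\le a-j-1,\ \tfrac{r+j}{b}-q\le k<\tfrac{r}{b}\Big\}\cup\Big\{m-(ka+r)\ \Big|\ a-j\le r\le a-1,\ \tfrac{r+j-(a+b)}{b}-q\le k<\tfrac{r}{b}\Big\},$$ where $k,r$ range over integers, and this union is disjoint.
   Context: The conductor $c$ of a numerical semigroup $S$ is the least element of $S$ with $c+n\in S$ for all $n\in\mathbb N$. For $x\in S$, $\mathrm D(x)=\{\alpha\in S\mid x-\alpha\in S\}$, and $\mathrm D(x_1,\ldots,x_t)=\mathrm D(x_1)\cup\cdots\cup\mathrm D(x_t)$. *)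

(* Defs.v *)
From mathcomp Require Import all_boot all_order all_algebra.
Set Implicit Arguments. Unset Strict Implicit. Unset Printing Implicit Defensive.
Import Order.TTheory GRing.Theory Num.Theory.
Local Open Scope ring_scope.

Inductive inS (a b : int) : int -> Prop :=
  | inS0 : inS a b 0
  | inS_add (x i : int) : inS a b x -> 0 <= i -> i <= b -> inS a b (x + (a + i)).

Definition is_conductor (S : int -> Prop) (c : int) : Prop :=
  [/\ S c, (forall n : nat, S (c + n%:Z)) &
      (forall c', S c' -> (forall n : nat, S (c' + n%:Z)) -> c <= c')].

Definition Dset (S : int -> Prop) (x : int) : int -> Prop :=
  fun alpha => S alpha /\ S (x - alpha).

Definition Dset2 (S : int -> Prop) (x1 x2 : int) : int -> Prop :=
  fun alpha => Dset S x1 alpha \/ Dset S x2 alpha.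

Definition ratz (z : int) : rat := z%:~R.

Definition setA (a b m q j : int) : int -> Prop :=
  fun x => exists k r : int, x = m - (k * a + r) /\
    [/\ 0 <= r, r <= a - j - 1,
        ratz (r + j) / ratz b - ratz q <= ratz k & ratz k < ratz r / ratz b].

Definition setB (a b m q j : int) : int -> Prop :=
  fun x => exists k r : int, x = m - (k * a + r) /\
    [/\ a - j <= r, r <= a - 1,
        ratz (r + j - (a + b)) / ratz b - ratz q <= ratz k &
        ratz k < ratz r / ratz b].

(* Main.v *)
Require Import Defs.
From mathcomp Require Import all_boot all_order all_algebra.
From mathcomp Require Import zify ring.
From Stdlib Require Import Classical.
Import Order.TTheory GRing.Theory Num.Theory.
Local Open Scope ring_scope.

Lemma inS_ex (a b x : int) : 0 <= b ->
  inS a b x <-> exists n : nat, n%:Z * a <= x <= n%:Z * (a + b).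
Proof.
move=> hb; split.
  elim=> [|y i _ [n hn] hi0 hib]; first by exists 0%N; rewrite !mul0r lexx.
  by exists n.+1; rewrite intS; nia.
case=> n; elim: n x => [|n IH] x hx.
  have -> : x = 0 by move: hx; rewrite !mul0r; lia.
  exact: inS0.
case: (lerP (x - n.+1%:Z * a) b) => hi.
  have -> : x = (x - a - (x - n.+1%:Z * a)) + (a + (x - n.+1%:Z * a)) by ring.
  apply: inS_add; [apply: IH|..]; rewrite intS in hx hi *; nia.
have -> : x = (x - a - b) + (a + b) by ring.
apply: inS_add; [apply: IH|..]; rewrite intS in hx hi *; nia.
Qed.

Lemma inS_div (a b k r : int) : 0 < a -> 0 <= b -> 0 <= r < a ->
  inS a b (k * a + r) <-> (0 <= k /\ r <= k * b).
Proof.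
move=> ha hb hr; rewrite inS_ex //; split.
  case=> n hn.
  have nk : n%:Z <= k by nia.
  have : n%:Z * (a + b) <= k * (a + b) by apply: ler_wpM2r => //; lia.
  nia.
case: k => [n|n] hk; last by lia.
by exists n; nia.
Qed.

Lemma dratzD (x y : int) : Defs.ratz (x + y) = Defs.ratz x + Defs.ratz y.
Proof. exact: intrD. Qed.
Lemma dratzM (x y : int) : Defs.ratz (x * y) = Defs.ratz x * Defs.ratz y.
Proof. exact: intrM. Qed.
Lemma ratz_le (x y : int) : (Defs.ratz x <= Defs.ratz y) = (x <= y).
Proof. exact: ler_int. Qed.
Lemma ratz_lt (x y : int) : (Defs.ratz x < Defs.ratz y) = (x < y).
Proof. exact: ltr_int. Qed.
Lemma ratz_gt0 (x : int) : (0 < Defs.ratz x) = (0 < x).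
Proof. exact: ltr0z. Qed.

Lemma rat_le (u v k b : int) : 0 < b ->
  (Defs.ratz u / Defs.ratz b - Defs.ratz v <= Defs.ratz k) <-> u <= (k + v) * b.
Proof.
move=> hb; rewrite lerBlDr ler_pdivrMr ?ratz_gt0 //.
by rewrite -dratzD -dratzM ratz_le.
Qed.

Lemma rat_lt (k r b : int) : 0 < b ->
  (Defs.ratz k < Defs.ratz r / Defs.ratz b) <-> k * b < r.
Proof.
move=> hb; rewrite ltr_pdivlMr ?ratz_gt0 //.
by rewrite -dratzM ratz_lt.
Qed.

Lemma uniq_div (a k r k' r' : int) : 0 < a -> 0 <= r < a -> 0 <= r' < a ->
  k * a + r = k' * a + r' -> r = r'.
Proof.
move=> ha hr hr' e.
have := modzMDl k r a; have := modzMDl k' r' a.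
by rewrite e => -> ; rewrite !modz_small.
Qed.

Theorem lemma4p2 (a b c m q j : int) :
  0 < b -> b < a ->
  is_conductor (inS a b) c ->
  2 * c - 1 <= m ->
  0 <= q -> 0 <= j -> j <= a - 1 ->
  (forall x : int,
     Dset2 (inS a b) m (m + q * a + j) x <->
     [\/ Dset (inS a b) m x, setA a b m q j x | setB a b m q j x])
  /\ (forall x : int, Dset (inS a b) m x -> ~ setA a b m q j x)
  /\ (forall x : int, Dset (inS a b) m x -> ~ setB a b m q j x)
  /\ (forall x : int, setA a b m q j x -> ~ setB a b m q j x).
Proof.
move=> hb hba [hc hcn _] hm hq hj0 hj1.
have ha : 0 < a by lia.
have hb0 : 0 <= b by lia.
set P := inS a b.
have F1 : forall z, c <= z -> P z.
  move=> z hz; have -> : z = c + (`|z - c|%N)%:Z by lia.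
  exact: hcn.
have F2 : forall z, P z -> 0 <= z.
  by move=> z /(inS_ex _ _ _ hb0) [n hn]; nia.
have Key : forall y, ~ P y -> P (m - y).
  move=> y hy; have c0 := F2 _ hc; apply: (F1).
  case: (ltrP y 0) => hy0; first by lia.
  case: (ltrP y c) => hyc; first by lia.
  by case: hy; apply: (F1).
have AB : forall x, (setA a b m q j x \/ setB a b m q j x) <->
    (~ P (m - x) /\ P (m - x + (q * a + j))).
  move=> x; split.
    case=> [[k [r [-> [h1 h2 h3 h4]]]]|[k [r [-> [h1 h2 h3 h4]]]]].
    - move: h3 h4; rewrite rat_le // rat_lt // => h3 h4.
      have -> : m - (m - (k * a + r)) = k * a + r by ring.
      split; first by rewrite /P inS_div //; [lia | lia].
      have -> : k * a + r + (q * a + j) = (k + q) * a + (r + j) by ring.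
      rewrite /P inS_div //; last by lia.
      by split; nia.
    - move: h3 h4; rewrite rat_le // rat_lt // => h3 h4.
      have -> : m - (m - (k * a + r)) = k * a + r by ring.
      split; first by rewrite /P inS_div //; [lia | lia].
      have -> : k * a + r + (q * a + j) = (k + q + 1) * a + (r + j - a) by ring.
      rewrite /P inS_div //; last by lia.
      by split; nia.
  move=> [hn hp].
  set y := m - x in hn hp.
  have hx : x = m - y by rewrite /y; ring.
  have ey := divz_eq y a.
  set k := (y %/ a)%Z in ey; set r := (y %% a)%Z in ey.
  have hr0 : 0 <= r by apply: modz_ge0; lia.
  have hr1 : r < a by apply: ltz_pmod.
  have hkb : k * b < r.
    case: (ltrP (k * b) r) => // h; case: hn; rewrite ey /P inS_div //; last by lia.
    by split => //; nia.
  case: (lerP r (a - j - 1)) => hrj.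
    left; exists k, r; split; first by rewrite hx {1}ey.
    split => //; last by rewrite rat_lt.
    rewrite rat_le //.
    move: hp; rewrite ey.
    have -> : k * a + r + (q * a + j) = (k + q) * a + (r + j) by ring.
    by rewrite /P inS_div //; [case | lia].
  right; exists k, r; split; first by rewrite hx {1}ey.
  split => //; [lia | lia | | by rewrite rat_lt].
  rewrite rat_le //.
  move: hp; rewrite ey.
  have -> : k * a + r + (q * a + j) = (k + q + 1) * a + (r + j - a) by ring.
  by rewrite /P inS_div //; [case => _ ?; lia | lia].
split.
  move=> x; split.
    case=> [hD|[hx hm']]; first by constructor 1.
    case: (classic (P (m - x))) => hmx; first by constructor 1.
    have : setA a b m q j x \/ setB a b m q j x.
      apply/AB; split => //.
      by have -> : m - x + (q * a + j) = m + q * a + j - x by ring.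
    by case=> h; [constructor 2 | constructor 3].
  case=> [hD|hA|hB]; first by left.
  - have [hn hp] := (proj1 (AB x)) (or_introl hA).
    right; split; first by have := Key _ hn; rewrite opprB addrC subrK.
    by have -> : m + q * a + j - x = m - x + (q * a + j) by ring.
  - have [hn hp] := (proj1 (AB x)) (or_intror hB).
    right; split; first by have := Key _ hn; rewrite opprB addrC subrK.
    by have -> : m + q * a + j - x = m - x + (q * a + j) by ring.
split.
  by move=> x [_ hp] hA; have [hn _] := (proj1 (AB x)) (or_introl hA).
split.
  by move=> x [_ hp] hB; have [hn _] := (proj1 (AB x)) (or_intror hB).
move=> x [k [r [-> [h1 h2 _ _]]]] [k' [r' [e [h1' h2' _ _]]]].
have : r = r'.
  have e2 : k * a + r = k' * a + r' by lia.
  refine (uniq_div _ _ _ _ _ ha _ _ e2); apply/andP; lia.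
lia.
Qed.
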